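(* Let $g\in F$. Then there exists $m\in\mathbb{N}$ such that for every $t\in(0,2^{-m})\cap S_0$ one has $\omega(t)\equiv\omega(g(t))\pmod 3$. Here $$S_0=\{t\in(0,1)\cap\mathbb{Z}[1/2]:\omega(t)=0,\ |t|\text{ even}\}.$$
   Context: Thompson's group $F$ is the group of piecewise linear homeomorphisms of $[0,1]$ that are differentiable except at finitely many dyadic rationals with slopes in $2^{\mathbb{Z}}$; $g(t)$ denotes the image of $t$ under $g$. The weight $\omega$ on finite binary words is defined by triples with - $(L,R,B)(\emptyset)=(0,1,2)$, - $(L,R,B)(z0)=(L(z),B(z),R(z))$, - $(L,R,B)(z1)=(B(z),R(z),L(z))$, and $\omega(z)=L(z)\in\mathbb{Z}_3$. This is the color of the region left of vertex $z$ (path word, $0$ = left, $1$ = right) in the proper $3$-coloring of the complement of the infinite rooted planar binary tree with the regions left of, right of and below the root colored $0,1,2$. For a dyadic rational $t\in(0,1)$, write $t=.a_1\cdots a_n$ for its terminating binary expansion with $a_n=1$, and set $|t|=n$ and $\omega(t)=\omega(a_1\cdots a_n)$. *)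

(* Defs.v *)
From Stdlib Require Import Reals List Arith ZArith.
Import ListNotations.
Open Scope R_scope.

Definition dyadic (x : R) : Prop :=
  exists (a : Z) (n : nat), x = IZR a / 2 ^ n.

(* Thompson's group F, as piecewise-linear maps of [0,1]:
   there are dyadic breakpoints 0 = x_0 < x_1 < ... < x_N = 1 such that on
   each [x_i, x_{i+1}] the map g is affine with slope 2^s_i (s_i in Z),
   g 0 = 0 and g 1 = 1.  (Such a g is an increasing PL homeomorphism of [0,1].) *)
Definition thompsonF (g : R -> R) : Prop :=
  g 0 = 0 /\ g 1 = 1 /\
  exists bp : list R,
    (2 <= length bp)%nat /\ nth 0 bp 0 = 0 /\ last bp 0 = 1 /\
    Forall dyadic bp /\
    forall i : nat, (S i < length bp)%nat ->
      nth i bp 0 < nth (S i) bp 0 /\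
      exists s : Z, forall x : R, nth i bp 0 <= x <= nth (S i) bp 0 ->
        g x = g (nth i bp 0) + powerRZ 2 s * (x - nth i bp 0).

(* t = k / 2^n with k odd, 0 < k < 2^n: t in (0,1) dyadic with terminating
   binary expansion .a_1...a_n, a_n = 1, and |t| = n. *)
Definition dyadic_repr (t : R) (n k : nat) : Prop :=
  (0 < k < 2 ^ n)%nat /\ Nat.odd k = true /\ t = INR k / 2 ^ n.

(* the n binary digits of k, most significant first: a_1 ... a_n *)
Fixpoint bits (n k : nat) : list bool :=
  match n with
  | O => []
  | S n' => bits n' (k / 2) ++ [Nat.odd k]
  end.

(* (L,R,B) triples; colors 0,1,2 represent Z_3 *)
Definition lrb_step (tr : nat * nat * nat) (a : bool) : nat * nat * nat :=
  let '(l, r, b) := tr in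
  if a then (b, r, l)   (* z1 : (B(z), R(z), L(z)) *)
  else (l, b, r).       (* z0 : (L(z), B(z), R(z)) *)

Definition lrb (w : list bool) : nat * nat * nat :=
  fold_left lrb_step w (0%nat, 1%nat, 2%nat).

Definition omega_word (w : list bool) : nat :=
  let '(l, _, _) := lrb w in l.

(* Main.v *)
Require Import Defs.
From Stdlib Require Import Reals List Arith ZArith Lia Lra.
Import ListNotations.
Open Scope R_scope.

Definition sw (x : nat) : nat := match x with 1%nat => 2%nat | 2%nat => 1%nat | _ => x end.

Lemma fold_map w : forall l r b,
  fold_left lrb_step w (sw l, sw r, sw b) =
  let '(l', r', b') := fold_left lrb_step w (l, r, b) in (sw l', sw r', sw b').
Proof. induction w as [|a w IH]; intros l r b; simpl; [reflexivity|].
  destruct a; apply IH. Qed.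

Lemma fold_zeros j : forall l r b, exists r' b',
  fold_left lrb_step (repeat false j) (l, r, b) = (l, r', b') /\
  ((r', b') = (r, b) \/ (r', b') = (b, r)).
Proof. induction j as [|j IH]; intros l r b; simpl.
  - exists r, b; auto.
  - destruct (IH l b r) as (r' & b' & H1 & H2). exists r', b'. split; auto.
    destruct H2 as [H2|H2]; inversion H2; subst; auto.
Qed.

Lemma sw0 x : sw x = 0%nat <-> x = 0%nat.
Proof. destruct x as [|[|[|x]]]; simpl; split; intro; try lia. Qed.

Lemma omega_zeros j w : omega_word (repeat false j ++ w) = 0%nat <-> omega_word w = 0%nat.
Proof. unfold omega_word, lrb. rewrite fold_left_app.
  destruct (fold_zeros j 0 1 2) as (r' & b' & H1 & [H2|H2]); rewrite H1; inversion H2; subst.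
  - tauto.
  - change (0%nat, 2%nat, 1%nat) with (sw 0, sw 1, sw 2). rewrite fold_map.
    destruct (fold_left lrb_step w (0%nat,1%nat,2%nat)) as [[l r] b]. apply sw0.
Qed.

Lemma bits_zero j : bits j 0 = repeat false j.
Proof. induction j as [|j IH]; simpl; [reflexivity|]. rewrite IH.
  change (repeat false j ++ [false] = repeat false (S j)). rewrite <- repeat_cons. reflexivity. Qed.

Lemma bits_pad a : forall k j, (k < 2 ^ a)%nat -> bits (a + j) k = repeat false j ++ bits a k.
Proof. induction a as [|a IH]; intros k j Hk.
  - simpl in Hk. assert (k = 0%nat) by lia. subst. simpl. rewrite bits_zero, app_nil_r. reflexivity.
  - change (S a + j)%nat with (S (a + j)). change (bits (S (a + j)) k) with (bits (a+j) (k/2) ++ [Nat.odd k]).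
    change (bits (S a) k) with (bits a (k/2) ++ [Nat.odd k]). rewrite IH.
    + rewrite app_assoc. reflexivity.
    + rewrite Nat.pow_succ_r' in Hk. apply Nat.Div0.div_lt_upper_bound. lia.
Qed.

Lemma pow2_INR a : INR (2 ^ a) = 2 ^ a.
Proof. rewrite pow_INR. reflexivity. Qed.

Lemma pow2_pos a : 0 < 2 ^ a.
Proof. apply pow_lt; lra. Qed.

Lemma pow2_ge1 a : 1 <= 2 ^ a.
Proof. change 1 with (2 ^ 0). apply Rle_pow; [lra|lia]. Qed.

Lemma main_pos n k j t : dyadic_repr t n k -> omega_word (bits n k) = 0%nat ->
  2 ^ j * t < 1 -> exists n' k', dyadic_repr (2 ^ j * t) n' k' /\
  omega_word (bits n' k') = omega_word (bits n k).
Proof.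
  intros (Hk & Hodd & Ht) Hom Hlt.
  assert (Hk1 : 1 <= INR k) by (apply (le_INR 1); lia).
  assert (Hjn : (j <= n)%nat).
  { destruct (le_lt_dec j n) as [h|h]; auto. exfalso.
    replace j with (n + (j - n))%nat in Hlt by lia. rewrite pow_add in Hlt.
    subst t. pose proof (pow2_pos n). pose proof (pow2_ge1 (j - n)).
    replace (2 ^ n * 2 ^ (j - n) * (INR k / 2 ^ n)) with (2 ^ (j-n) * INR k) in Hlt
      by (field; lra). nra. }
  assert (Heq : 2 ^ j * t = INR k / 2 ^ (n - j)).
  { subst t. replace n with ((n - j) + j)%nat at 1 by lia. rewrite pow_add.
    pose proof (pow2_pos (n-j)). pose proof (pow2_pos j). field; lra. }
  assert (Hkl : (k < 2 ^ (n - j))%nat).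
  { apply INR_lt. rewrite pow2_INR. rewrite Heq in Hlt. pose proof (pow2_pos (n-j)).
    apply (Rmult_lt_compat_r (2 ^ (n - j))) in Hlt; auto.
    replace (INR k / 2 ^ (n - j) * 2 ^ (n - j)) with (INR k) in Hlt by (field; lra). lra. }
  assert (Hb : bits n k = repeat false j ++ bits (n - j) k).
  { rewrite <- bits_pad by exact Hkl. f_equal. lia. }
  exists (n - j)%nat, k. rewrite Heq. split; [split; [split|split]|]; auto.
  - lia.
  - rewrite Hb in Hom |- *. rewrite Hom. apply omega_zeros in Hom. exact Hom.
Qed.

Lemma main_neg n k j t : dyadic_repr t n k -> omega_word (bits n k) = 0%nat ->
  exists n' k', dyadic_repr (/ 2 ^ j * t) n' k' /\
  omega_word (bits n' k') = omega_word (bits n k).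
Proof.
  intros (Hk & Hodd & Ht) Hom.
  exists (n + j)%nat, k. split; [split; [split|split]|]; auto.
  - lia.
  - rewrite Nat.pow_add_r. pose proof (Nat.pow_nonzero 2 j). nia.
  - subst t. rewrite pow_add. pose proof (pow2_pos n). pose proof (pow2_pos j). field; lra.
  - rewrite bits_pad by lia. rewrite Hom. apply omega_zeros. exact Hom.
Qed.

Theorem lemma2p12 (g : R -> R) (hg : thompsonF g) :
  exists m : nat,
    forall (t : R) (n k : nat),
      dyadic_repr t n k ->
      Nat.even n = true ->
      omega_word (bits n k) = 0%nat ->
      0 < t < / 2 ^ m ->
      exists n' k' : nat,
        dyadic_repr (g t) n' k' /\
        omega_word (bits n' k') = omega_word (bits n k).
Proof.
  destruct hg as (g0 & g1 & bp & Hlen & H0 & Hlast & Hdy & Hpieces).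
  destruct (Hpieces 0%nat ltac:(lia)) as [Hx1 [s Hs]].
  rewrite H0 in Hx1, Hs. rewrite g0 in Hs.
  assert (Hd : dyadic (nth 1 bp 0)) by (rewrite Forall_nth in Hdy; apply Hdy; lia).
  destruct Hd as (a & p & Ha).
  set (x1 := nth 1 bp 0) in *.
  assert (Hp : / 2 ^ p <= x1).
  { rewrite Ha in Hx1 |- *. pose proof (pow2_pos p).
    assert (0 < IZR a).
    { apply (Rmult_lt_compat_r (2 ^ p)) in Hx1; auto.
      replace (IZR a / 2 ^ p * 2 ^ p) with (IZR a) in Hx1 by (field; lra). lra. }
    apply lt_0_IZR in H1. assert (1 <= IZR a) by (apply IZR_le; lia).
    unfold Rdiv. rewrite <- (Rmult_1_l (/ 2 ^ p)) at 1.
    apply Rmult_le_compat_r; auto. left; apply Rinv_0_lt_compat; auto. }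
  exists (p + Z.abs_nat s + 1)%nat.
  intros t n k Hr Hev Hom [Ht0 Ht1].
  assert (Htx : t <= x1).
  { left. eapply Rlt_le_trans; [exact Ht1|]. eapply Rle_trans; [|exact Hp].
    apply Rinv_le_contravar; [apply pow2_pos|]. apply Rle_pow; [lra|lia]. }
  rewrite (Hs t) by lra. rewrite Rplus_0_l, Rminus_0_r.
  destruct s as [|q|q].
  - simpl powerRZ. replace (1 * t) with (2 ^ 0 * t) by (simpl; ring).
    apply main_pos; auto. change (Z.abs_nat 0) with 0%nat in Ht1. simpl (2 ^ 0). rewrite Rmult_1_l. pose proof (pow2_ge1 (p + 0 + 1)).
    assert (/ 2 ^ (p + 0 + 1) <= 1).
    { rewrite <- Rinv_1. apply Rinv_le_contravar; lra. }
    lra.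
  - change (powerRZ 2 (Z.pos q)) with (2 ^ Pos.to_nat q).
    apply main_pos; auto.
    change (Z.abs_nat (Z.pos q)) with (Pos.to_nat q) in Ht1.
    set (j := Pos.to_nat q) in *.
    pose proof (pow2_pos j). pose proof (pow2_pos p).
    apply (Rmult_lt_compat_l (2 ^ j)) in Ht1; auto.
    rewrite !pow_add in Ht1. simpl pow in Ht1.
    replace (2 ^ j * / (2 ^ p * 2 ^ j * (2 * 1))) with (/ (2 * 2 ^ p)) in Ht1 by (field; lra).
    pose proof (pow2_ge1 p).
    assert (/ (2 * 2 ^ p) <= 1).
    { rewrite <- Rinv_1. apply Rinv_le_contravar; lra. }
    lra.
  - change (powerRZ 2 (Z.neg q)) with (/ 2 ^ Pos.to_nat q).
    apply main_neg; auto.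
Qed.
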